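(* Let $\mathcal{H}$ be a complex Hilbert space, let $A\in\mathcal{B}(\mathcal{H})$ be a nonzero positive operator, and let $P,Q\in\mathcal{B}_A(\mathcal{H})$. Then for every $\lambda\in[0,1]$, $$\omega_A(P\pm Q)\leq\min\{\mu,\nu\},$$ where $$\mu=\omega_A(P)+\frac12\left(\|P\|_A+\sqrt{\|\lambda^2PP^{\sharp_A}+QQ^{\sharp_A}\|_A}+\sqrt{\|(1-\lambda)^2PP^{\sharp_A}+Q^{\sharp_A}Q\|_A}\right)$$ and $$\nu=\frac32\omega_A(P)+\frac12\left[\sqrt{\lambda^2\omega_A^2(P)+\|Q\|_A^2}+\sqrt{(1-\lambda)^2\omega_A^2(P)+\|Q\|_A^2}\right].$$
   Context: For a positive operator $A$ on $\mathcal{H}$, $\langle x,y\rangle_A:=\langle Ax,y\rangle$ and $\|x\|_A:=\sqrt{\langle x,x\rangle_A}$. $\mathcal{B}_A(\mathcal{H})$ is the set of $T\in\mathcal{B}(\mathcal{H})$ with $\mathcal{R}(T^*A)\subseteq\mathcal{R}(A)$; for such $T$, $T^{\sharp_A}$ denotes the unique solution $X$ of $AX=T^*A$ with $\mathcal{R}(X)\subseteq\overline{\mathcal{R}(A)}$. For $T$ bounded with respect to $\|\cdot\|_A$: $\|T\|_A:=\sup\{\|Tx\|_A:\|x\|_A=1\}$ and $\omega_A(T):=\sup\{|\langle Tx,x\rangle_A|:\|x\|_A=1\}$. *)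

(* Defs.v *)
From mathcomp Require Import all_boot all_order all_algebra.
From mathcomp Require Import complex.
From mathcomp Require Import classical_sets reals.
Set Implicit Arguments. Unset Strict Implicit. Unset Printing Implicit Defensive.
Import Order.TTheory GRing.Theory Num.Theory.
Local Open Scope ring_scope.
Local Open Scope classical_set_scope.

Section Hilbert.
Variables (R : realType) (H : lmodType R[i]) (ip : H -> H -> R[i]).

Definition is_inner_product : Prop :=
  [/\ (forall (a : R[i]) (x y z : H), ip (a *: x + y) z = a * ip x z + ip y z),
      (forall x y : H, ip y x = (ip x y)^*)%C,
      (forall x : H, 0 <= ip x x) &
      (forall x : H, ip x x = 0 -> x = 0)].

Definition hnorm (x : H) : R := Num.sqrt (@complex.Re R (ip x x)).

Definition hcomplete : Prop :=
  forall u : nat -> H,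
    (forall e : R, 0 < e -> exists N : nat, forall m n : nat,
        (N <= m)%N -> (N <= n)%N -> hnorm (u m - u n) < e) ->
    exists l : H, forall e : R, 0 < e -> exists N : nat, forall n : nat,
        (N <= n)%N -> hnorm (u n - l) < e.

Definition hilbert_space : Prop := is_inner_product /\ hcomplete.

Definition bounded_op (T : H -> H) : Prop :=
  (forall (a : R[i]) (x y : H), T (a *: x + y) = a *: T x + T y) /\
  exists c : R, forall x : H, hnorm (T x) <= c * hnorm x.

Definition is_adjoint (T S : H -> H) : Prop :=
  bounded_op S /\ forall x y : H, ip (T x) y = ip x (S y).

Definition positive_op (A : H -> H) : Prop :=
  bounded_op A /\ forall x : H, 0 <= ip (A x) x.

Definition in_closure_range (A : H -> H) (y : H) : Prop :=
  forall e : R, 0 < e -> exists x : H, hnorm (y - A x) < e.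

(* T \in B_A(H) : T \in B(H) and R(T^* A) \subseteq R(A) *)
Definition in_BA (A T : H -> H) : Prop :=
  bounded_op T /\
  exists S : H -> H, is_adjoint T S /\ forall x : H, exists y : H, S (A x) = A y.

(* X = T^{#_A}: the (unique) solution of A X = T^* A with R(X) \subseteq closure R(A) *)
Definition is_Asharp (A T X : H -> H) : Prop :=
  bounded_op X /\
  exists S : H -> H, [/\ is_adjoint T S,
     (forall x : H, A (X x) = S (A x)) &
     (forall x : H, in_closure_range A (X x))].

Definition ipA (A : H -> H) (x y : H) : R[i] := ip (A x) y.
Definition normA (A : H -> H) (x : H) : R := Num.sqrt (@complex.Re R (ipA A x x)).

Definition opnormA (A T : H -> H) : R :=
  sup [set normA A (T x) | x in [set x : H | normA A x = 1]].

Definition cmod (z : R[i]) : R :=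
  Num.sqrt (complex.Re z ^+ 2 + complex.Im z ^+ 2).

Definition numradA (A T : H -> H) : R :=
  sup [set cmod (ipA A (T x) x) | x in [set x : H | normA A x = 1]].

End Hilbert.

(* Main.v *)
Require Import Defs.
From mathcomp Require Import all_boot all_order all_algebra.
From mathcomp Require Import complex.
From mathcomp Require Import classical_sets reals.
From mathcomp Require Import boolp ring lra zify.
Import Order.TTheory GRing.Theory Num.Theory.
Local Open Scope ring_scope.
Local Open Scope classical_set_scope.
Set Implicit Arguments. Unset Strict Implicit. Unset Printing Implicit Defensive.

Section Forms.
Variables (R : realType) (H : lmodType R[i]) (g : H -> H -> R[i]).
Local Open Scope complex_scope.
Hypothesis gD : forall (a : R[i]) (x y z : H), g (a *: x + y) z = a * g x z + g y z.
Hypothesis gD2 : forall (a : R[i]) (x y z : H), g z (a *: x + y) = a^* * g z x + g z y.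

Lemma g_expand (c : R[i]) x y :
  g (x + c *: y) (x + c *: y) = g x x + c^* * g x y + c * g y x + c * c^* * g y y.
Proof.
rewrite -[x + _]scale1r. 
have e1 : forall u v w, g (u + v) w = g u w + g v w.
  by move=> u v w; rewrite -[u + v]/(u + v) -{1}[u]scale1r gD mul1r.
have e2 : forall u v w, g w (u + v) = g w u + g w v.
  by move=> u v w; rewrite -{1}[u]scale1r gD2 rmorph1 mul1r.
rewrite scale1r e1 !e2 -[c *: y]addr0 gD !gD2 !addr0.
have z0 : forall w, g 0 w = 0.
  by move=> w; apply: (addrI (g 0 w)); rewrite addr0 -e1 addr0.
have z0' : forall w, g w 0 = 0.
  by move=> w; apply: (addrI (g w 0)); rewrite addr0 -e2 addr0.
rewrite !z0 !z0' !addr0.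
have e3 : forall u w, g (c *: u) w = c * g u w.
  by move=> u w; rewrite -[c *: u]addr0 gD z0 addr0.
rewrite e3; ring.
Qed.
End Forms.
Section Polar.
Variables (R : realType) (H : lmodType R[i]) (g : H -> H -> R[i]).
Local Open Scope complex_scope.
Hypothesis gD : forall (a : R[i]) (x y z : H), g (a *: x + y) z = a * g x z + g y z.
Hypothesis gD2 : forall (a : R[i]) (x y z : H), g z (a *: x + y) = a^* * g z x + g z y.
Hypothesis gR : forall x, complex.Im (g x x) = 0.

Lemma g_herm x y : g y x = (g x y)^*.
Proof.
have h1 := gR (x + 1 *: y); have h2 := gR (x + 'i *: y).
rewrite g_expand // in h1; rewrite g_expand // in h2.
move: h1 h2 (gR x) (gR y).
case: (g x x) => a1 a2; case: (g x y) => b1 b2; case: (g y x) => c1 c2; case: (g y y) => d1 d2.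
rewrite -[1]/(1 +i* 0).
simpc. move=> /= h1 h2 h3 h4.
apply/eqP; rewrite eq_complex /=; apply/andP; split; apply/eqP; lra.
Qed.
End Polar.
Lemma quad_aux (R : realType) (a b w : R) : 0 <= a -> 0 <= b -> 0 <= w ->
  (forall t, 0 <= a - 2 * t * w + t ^+ 2 * w * b) -> w <= a * b.
Proof.
move=> a0 b0 w0 h.
have [->|wp] := eqVneq w 0; first by rewrite mulr_ge0.
have {}wp : 0 < w by rewrite lt_neqAle eq_sym wp w0.
have [b0'|bp] := eqVneq b 0.
  have := h ((a + 1) / (2 * w)); rewrite b0' mulr0 addr0.
  have -> : 2 * ((a + 1) / (2 * w)) * w = a + 1 by field; rewrite gt_eqF.
  lra.
have {}bp : 0 < b by rewrite lt_neqAle eq_sym bp b0.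
have h1 := h (b^-1).
have : 0 <= (a - 2 * b^-1 * w + b^-1 ^+ 2 * w * b) * b by rewrite mulr_ge0 // ltW.
have -> : (a - 2 * b^-1 * w + b^-1 ^+ 2 * w * b) * b = a * b - w by field; rewrite gt_eqF.
lra.
Qed.
Lemma Re_le_cmod (R : realType) (z : R[i]) : complex.Re z <= cmod z.
Proof.
rewrite /cmod; apply: le_trans (ler_norm _) _.
rewrite -sqrtr_sqr ler_sqrt ?addr_ge0 ?sqr_ge0 // lerDl sqr_ge0 //.
Qed.

Section CS.
Variables (R : realType) (H : lmodType R[i]) (g : H -> H -> R[i]).
Local Open Scope complex_scope.
Hypothesis gD : forall (a : R[i]) (x y z : H), g (a *: x + y) z = a * g x z + g y z.
Hypothesis gC : forall x y, g y x = (g x y)^*.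
Hypothesis gP : forall x, 0 <= g x x.

Lemma gD2' (a : R[i]) (x y z : H) : g z (a *: x + y) = a^* * g z x + g z y.
Proof. by rewrite gC gD rmorphD rmorphM /= -!gC. Qed.

Lemma gRe x : (complex.Re (g x x))%:C = g x x.
Proof. by have := gP x; case: (g x x) => a b; rewrite lecE /= => /andP[/eqP -> _]. Qed.

Lemma gRe_ge0 x : 0 <= complex.Re (g x x).
Proof. by have := gP x; case: (g x x) => a b; rewrite lecE /= => /andP[_ ->]. Qed.

Lemma CS x y : cmod (g x y) <= Num.sqrt (complex.Re (g x x)) * Num.sqrt (complex.Re (g y y)).
Proof.
rewrite -sqrtrM ?gRe_ge0 // /cmod ler_sqrt ?mulr_ge0 ?gRe_ge0 //.
apply: quad_aux; rewrite ?gRe_ge0 ?addr_ge0 ?sqr_ge0 // => t.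
have := gP (x + (- (t%:C * g x y)) *: y).
rewrite g_expand //; last exact: gD2'.
rewrite (gC x y).
move: (gP x) (gP y).
case: (g x x) => a1 a2; case: (g x y) => b1 b2; case: (g y y) => d1 d2.
rewrite -[t%:C]/(t +i* 0).
simpc; rewrite /= => /andP[/eqP a20 a1p] /andP[/eqP d20 d1p] /andP[_ h].
rewrite d20 in h. nra.
Qed.

Lemma ng_comb (t : R) x y : 0 <= t ->
  Num.sqrt (complex.Re (g (t%:C *: x + y) (t%:C *: x + y)))
  <= t * Num.sqrt (complex.Re (g x x)) + Num.sqrt (complex.Re (g y y)).
Proof.
move=> t0.
have hcs := CS x y.
have hre := Re_le_cmod (g x y).
set al := Num.sqrt (complex.Re (g x x)) in hcs *.
set be := Num.sqrt (complex.Re (g y y)) in hcs *.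
have al0 : 0 <= al := sqrtr_ge0 _.
have be0 : 0 <= be := sqrtr_ge0 _.
have eal : al ^+ 2 = complex.Re (g x x) by rewrite sqr_sqrtr // gRe_ge0.
have ebe : be ^+ 2 = complex.Re (g y y) by rewrite sqr_sqrtr // gRe_ge0.
rewrite -[X in _ <= X]ger0_norm ?addr_ge0 ?mulr_ge0 // -sqrtr_sqr.
rewrite ler_sqrt ?sqr_ge0 //.
rewrite addrC g_expand //; last exact: gD2'.
rewrite (gC x y) -(gRe x) -(gRe y) -eal -ebe.
move: hre hcs; case: (g x y) => p q /= hre hcs.
rewrite !(mul0r, mulr0, oppr0, subr0, addr0).
nra.
Qed.
End CS.
Lemma bern (R : realType) (d : R) n : 0 <= d -> 1 + n%:R * d <= (1 + d) ^+ n.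
Proof.
move=> d0; elim: n => [|n IH]; first by rewrite mul0r addr0 expr0.
rewrite exprS -nat1r.
have h : 0 <= n%:R * d by rewrite mulr_ge0.
nra.
Qed.

Lemma pow_unbounded (R : realType) (r K : R) : 1 < r -> ~ (forall n, r ^+ (2 ^ n) <= K).
Proof.
move=> r1 h.
set d := r - 1.
have d0 : 0 < d by rewrite subr_gt0.
have K0 : 0 <= K by apply: le_trans (h 0%N); rewrite exprn_ge0 // ltW // (lt_trans ltr01).
set m := Num.bound (K / d).
have hm := archi_boundP (divr_ge0 K0 (ltW d0)).
have hm2 : (m%:R : R) <= (2 ^ m)%:R by rewrite ler_nat ltnW // ltn_expl.
have := bern (2 ^ m) (ltW d0).
have e : 1 + d = r by rewrite /d addrC subrK.
rewrite e => hb.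
have := h m.
have : K < (2 ^ m)%:R * d.
  by rewrite -ltr_pdivrMr //; apply: lt_le_trans hm hm2.
lra.
Qed.

Lemma iter_sq (T : Type) (f : T -> T) k x : iter k (f \o f) x = iter (2 * k) f x.
Proof.
elim: k => [//|k IH]; by rewrite mulnS !iterS IH.
Qed.

Lemma cmodE (R : realType) (z : R[i]) : cmod z = Normc.normc z.
Proof. by case: z. Qed.
Lemma cmodD (R : realType) (z w : R[i]) : cmod (z + w) <= cmod z + cmod w.
Proof. by rewrite !cmodE (@le_normcD R). Qed.
Lemma cmodN (R : realType) (z : R[i]) : cmod (- z) = cmod z.
Proof. by rewrite !cmodE (@normcN R). Qed.
Lemma cmodJ (R : realType) (z : R[i]) : cmod (z^*)%C = cmod z.
Proof. by case: z => a b; rewrite /cmod /= sqrrN. Qed.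
Lemma cmod_ge0 (R : realType) (z : R[i]) : 0 <= cmod z.
Proof. exact: sqrtr_ge0. Qed.
Lemma ReJ (R : realType) (z : R[i]) : complex.Re (z^*)%C = complex.Re z.
Proof. by case: z. Qed.
Lemma Re_comb (R : realType) (t : R) (z w : R[i]) :
  complex.Re (t%:C%C * z + w) = t * complex.Re z + complex.Re w.
Proof. by case: z => a b; case: w => c d /=; rewrite mul0r subr0. Qed.

Lemma sup_ge0' (R : realType) (E : set R) : (forall y, E y -> 0 <= y) -> 0 <= sup E.
Proof.
move=> h; have [hs|hs] := pselect (has_sup E); last by rewrite sup_out.
case: (hs) => -[y Ey] hu; apply: le_trans (h y Ey) _; exact: (ub_le_sup hu).
Qed.

Lemma sup_le' (R : realType) (E : set R) c : 0 <= c -> (forall y, E y -> y <= c) -> sup E <= c.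
Proof.
move=> c0 h; have [ne|ne] := pselect (E !=set0); first by apply: ge_sup.
have -> : E = set0.
  by apply/seteqP; split => y Ey //; exfalso; apply: ne; exists y.
by rewrite sup0.
Qed.

Section Main.
Variables (R : realType) (H : lmodType R[i]) (ip : H -> H -> R[i]) (A : H -> H).
Hypothesis hip : is_inner_product ip.
Hypothesis hA : positive_op ip A.
Local Open Scope complex_scope.

Let ipD : forall (a : R[i]) (x y z : H), ip (a *: x + y) z = a * ip x z + ip y z.
Proof. by case: hip. Qed.
Let ipC : forall x y : H, ip y x = (ip x y)^*.
Proof. by case: hip. Qed.
Let ipP : forall x : H, 0 <= ip x x.
Proof. by case: hip. Qed.
Let AD : forall (a : R[i]) (x y : H), A (a *: x + y) = a *: A x + A y.
Proof. by case: hA => -[]. Qed.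

Notation s := (ipA ip A).
Notation nA := (normA ip A).
Notation hn := (hnorm ip).

Lemma sD (a : R[i]) (x y z : H) : s (a *: x + y) z = a * s x z + s y z.
Proof. by rewrite /ipA AD ipD. Qed.
Lemma sD2 (a : R[i]) (x y z : H) : s z (a *: x + y) = a^* * s z x + s z y.
Proof. by rewrite /ipA (gD2' ipD ipC). Qed.
Lemma sP x : 0 <= s x x.
Proof. by case: hA => _; apply. Qed.
Lemma sR x : complex.Im (s x x) = 0.
Proof. by have := sP x; case: (s x x) => a b; rewrite lecE /= => /andP[/eqP -> _]. Qed.
Lemma sC x y : s y x = (s x y)^*.
Proof. exact: (g_herm sD sD2 sR). Qed.

Lemma CSA x y : cmod (s x y) <= nA x * nA y.
Proof. exact: (CS sD sC sP). Qed.
Lemma CSH x y : cmod (ip x y) <= hn x * hn y.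
Proof. exact: (CS ipD ipC ipP). Qed.

Lemma nA_ge0 x : 0 <= nA x.
Proof. exact: sqrtr_ge0. Qed.
Lemma hn_ge0 x : 0 <= hn x.
Proof. exact: sqrtr_ge0. Qed.
Lemma nA_sq x : nA x ^+ 2 = complex.Re (s x x).
Proof. by rewrite sqr_sqrtr // (gRe_ge0 sP). Qed.

Lemma nA_bound : exists a : R, 0 <= a /\ forall x, nA x <= a * hn x.
Proof.
case: hA => -[_ [a ha]] _.
exists (Num.sqrt (Num.max a 0)); split; first exact: sqrtr_ge0.
move=> x.
rewrite /normA -[hn x]ger0_norm ?hn_ge0 // -sqrtr_sqr -sqrtrM ?le_max ?lexx ?orbT //.
rewrite ler_sqrt ?mulr_ge0 ?le_max ?lexx ?orbT ?sqr_ge0 //.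
apply: le_trans (Re_le_cmod _) _; apply: le_trans (CSH _ _) _.
rewrite expr2 mulrA ler_wpM2r ?hn_ge0 //; apply: le_trans (ha x) _.
by rewrite ler_wpM2r ?hn_ge0 // le_max lexx.
all: exact: hn_ge0.
Qed.

Lemma iter_ineq n : forall B : H -> H, (forall x y, s (B x) y = s x (B y)) ->
  forall x, nA (B x) ^+ (2 ^ n) <= nA (iter (2 ^ n) B x) * nA x ^+ (2 ^ n - 1).
Proof.
elim: n => [|n IH] B hB x.
  by rewrite expn0 subnn expr0 mulr1 expr1.
have step : nA (B x) ^+ 2 <= nA (B (B x)) * nA x.
  rewrite nA_sq hB; apply: le_trans (Re_le_cmod _) _; rewrite mulrC; exact: CSA.
have hBB : forall x y, s ((B \o B) x) y = s x ((B \o B) y) by move=> u v /=; rewrite !hB.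
have := IH _ hBB x; rewrite iter_sq -expnS /= => h2.
rewrite [in X in X <= _]expnS exprM.
have h3 : (nA (B x) ^+ 2) ^+ (2^n) <= (nA (B (B x)) * nA x) ^+ (2^n).
  by apply: lerXn2r; rewrite // nnegrE ?exprn_ge0 ?mulr_ge0 ?nA_ge0.
apply: le_trans h3 _.
rewrite exprMn.
apply: le_trans (ler_wpM2r (exprn_ge0 _ (nA_ge0 _)) h2) _.
rewrite -mulrA -exprD.
have -> : (2 ^ n - 1 + 2 ^ n = 2 ^ n.+1 - 1)%N.
  rewrite expnS; have := expn_gt0 2 n; lia.
done.
Qed.

Lemma bnd_pos (T : H -> H) : (exists b : R, forall x, hn (T x) <= b * hn x) ->
  exists b : R, 1 <= b /\ forall x, hn (T x) <= b * hn x.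
Proof.
case=> b hb; exists (Num.max b 1); split; first by rewrite le_max lexx orbT.
move=> x; apply: le_trans (hb x) _; rewrite ler_wpM2r ?hn_ge0 //.
by rewrite le_max lexx.
Qed.

Lemma sa_bound (B : H -> H) : (forall x y, s (B x) y = s x (B y)) ->
  (exists b : R, forall x, hn (B x) <= b * hn x) ->
  exists c : R, forall x, nA x = 1 -> nA (B x) <= c.
Proof.
move=> hB /bnd_pos [b [b1 hb]].
have [a [a0 ha]] := nA_bound.
have hit : forall k x, hn (iter k B x) <= b ^+ k * hn x.
  elim=> [|k IH] x; first by rewrite expr0 mul1r.
  rewrite iterS exprS -mulrA; apply: le_trans (hb _) _.
  by rewrite ler_wpM2l // (le_trans ler01 b1).
exists b => x nx1.
rewrite leNgt; apply/negP => hlt.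
have b0 : 0 < b by apply: lt_le_trans ltr01 b1.
apply: (@pow_unbounded _ (nA (B x) / b) (a * hn x)).
  by rewrite ltr_pdivlMr // mul1r.
move=> n.
have := iter_ineq n hB x; rewrite nx1 expr1n mulr1 => h1.
rewrite expr_div_n ler_pdivrMr ?exprn_gt0 //.
apply: (le_trans h1); apply: (le_trans (ha _)).
rewrite -mulrA ler_wpM2l // mulrC; exact: hit.
Qed.

Definition bnd (T : H -> H) := exists b : R, forall x, hn (T x) <= b * hn x.

Lemma bnd_comp T U : bnd T -> bnd U -> bnd (T \o U).
Proof.
move=> /bnd_pos[a [a1 ha]] /bnd_pos[b [b1 hb]]; exists (a * b) => x /=.
apply: le_trans (ha _) _; rewrite -mulrA ler_wpM2l //; first exact: le_trans ler01 a1.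
Qed.

Lemma adj_bound (T X : H -> H) : (forall x y, s (T x) y = s x (X y)) -> bnd T -> bnd X ->
  exists c : R, forall x, nA x = 1 -> nA (T x) <= c.
Proof.
move=> hT bT bX.
have hB : forall x y, s ((X \o T) x) y = s x ((X \o T) y).
  move=> x y /=; rewrite sC -hT -hT -sC //.
have [c hc] := sa_bound hB (bnd_comp bX bT).
exists (c + 1) => x nx1.
have h : nA (T x) ^+ 2 <= c.
  rewrite nA_sq hT; apply: le_trans (Re_le_cmod _) _; apply: le_trans (CSA _ _) _.
  by rewrite nx1 mul1r; exact: hc.
have := nA_ge0 (T x); nra.
Qed.

Lemma nAcomb (t : R) x y : 0 <= t -> nA (t%:C *: x + y) <= t * nA x + nA y.
Proof. exact: (ng_comb sD sC sP). Qed.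

Lemma sDD u v w : s (u + v) w = s u w + s v w.
Proof. by rewrite -[u + v]/(u + v) -{1}[u]scale1r sD mul1r. Qed.

Definition ubd (T : H -> H) := exists c : R, forall x, nA x = 1 -> nA (T x) <= c.

Lemma opn_ub T x : ubd T -> nA x = 1 -> nA (T x) <= opnormA ip A T.
Proof.
move=> [c hc] nx; apply: (ub_le_sup); last by exists x.
by exists c => y [z hz <-]; exact: hc.
Qed.

Lemma opn_ge0 T : 0 <= opnormA ip A T.
Proof. by apply: sup_ge0' => y [z _ <-]; exact: nA_ge0. Qed.

Lemma nr_ub T x : ubd T -> nA x = 1 -> cmod (s (T x) x) <= numradA ip A T.
Proof.
move=> [c hc] nx; apply: (ub_le_sup); last by exists x.
exists c => y [z hz <-]; apply: le_trans (CSA _ _) _; rewrite hz mulr1; exact: hc.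
Qed.

Lemma nr_ge0 T : 0 <= numradA ip A T.
Proof. by apply: sup_ge0' => y [z _ <-]; exact: cmod_ge0. Qed.

Lemma nr_le T c : 0 <= c -> (forall x, nA x = 1 -> cmod (s (T x) x) <= c) ->
  numradA ip A T <= c.
Proof. by move=> c0 h; apply: sup_le' => // y [z hz <-]; exact: h. Qed.

Lemma Re_le_opn T x : ubd T -> nA x = 1 -> complex.Re (s (T x) x) <= opnormA ip A T.
Proof.
move=> hT nx; apply: le_trans (Re_le_cmod _) _; apply: le_trans (CSA _ _) _.
rewrite nx mulr1; exact: opn_ub.
Qed.

Lemma ipAself u v : ip u (A v) = ip (A u) v.
Proof. by rewrite ipC -[ip (A v) u]/(s v u) sC conjcK. Qed.

Lemma main_ineq (P Q Ps Qs : H -> H) (lam : R) :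
  bnd P -> bnd Q -> bnd Ps -> bnd Qs ->
  (forall x y, s (P x) y = s x (Ps y)) -> (forall x y, s (Q x) y = s x (Qs y)) ->
  0 <= lam -> lam <= 1 ->
  let mu := numradA ip A P
      + 2^-1 * (opnormA ip A P
         + Num.sqrt (opnormA ip A (fun x => (lam ^+ 2)%:C%C *: P (Ps x) + Q (Qs x)))
         + Num.sqrt (opnormA ip A (fun x => ((1 - lam) ^+ 2)%:C%C *: P (Ps x) + Qs (Q x)))) in
  let nu := 3 / 2 * numradA ip A P
      + 2^-1 * (Num.sqrt (lam ^+ 2 * numradA ip A P ^+ 2 + opnormA ip A Q ^+ 2)
         + Num.sqrt ((1 - lam) ^+ 2 * numradA ip A P ^+ 2 + opnormA ip A Q ^+ 2)) in
  numradA ip A (fun x => P x + Q x) <= Num.min mu nu /\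
  numradA ip A (fun x => P x - Q x) <= Num.min mu nu.
Proof.
move=> bP bQ bPs bQs aP aQ l0 l1; cbv zeta.
have aPs : forall x y, s (Ps x) y = s x (P y) by move=> x y; rewrite sC -aP -sC.
have aQs : forall x y, s (Qs x) y = s x (Q y) by move=> x y; rewrite sC -aQ -sC.
have uP : ubd P := adj_bound aP bP bPs.
have uQ : ubd Q := adj_bound aQ bQ bQs.
have [c1 h1] : ubd (P \o Ps).
  apply: sa_bound (bnd_comp bP bPs) => x y /=; by rewrite aP aPs.
have [c2 h2] : ubd (Q \o Qs).
  apply: sa_bound (bnd_comp bQ bQs) => x y /=; by rewrite aQ aQs.
have [c3 h3] : ubd (Qs \o Q).
  apply: sa_bound (bnd_comp bQs bQ) => x y /=; by rewrite aQs aQ.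
set T1 := (fun x => (lam ^+ 2)%:C%C *: P (Ps x) + Q (Qs x)).
set T2 := (fun x => ((1 - lam) ^+ 2)%:C%C *: P (Ps x) + Qs (Q x)).
have u1 : ubd T1.
  exists (lam ^+ 2 * c1 + c2) => x nx; apply: le_trans (nAcomb _ _ (sqr_ge0 _)) _.
  by apply: lerD; [apply: ler_wpM2l; [exact: sqr_ge0| exact: h1] | exact: h2].
have u2 : ubd T2.
  exists ((1 - lam) ^+ 2 * c1 + c3) => x nx; apply: le_trans (nAcomb _ _ (sqr_ge0 _)) _.
  by apply: lerD; [apply: ler_wpM2l; [exact: sqr_ge0| exact: h1] | exact: h3].
set wP := numradA ip A P.
set wQ := numradA ip A Q.
set nP := opnormA ip A P.
set nQ := opnormA ip A Q.
set t1 := opnormA ip A T1.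
set t2 := opnormA ip A T2.
have wP0 : 0 <= wP := nr_ge0 _.
have wQ0 : 0 <= wQ := nr_ge0 _.
have nP0 : 0 <= nP := opn_ge0 _.
have nQ0 : 0 <= nQ := opn_ge0 _.
have PPs0 : forall x, 0 <= complex.Re (s (P (Ps x)) x).
  by move=> x; rewrite aP; exact: (gRe_ge0 sP).
have F3 : wQ <= nQ.
  apply: nr_le => // x nx; apply: le_trans (CSA _ _) _; rewrite nx mulr1.
  exact: opn_ub.
have F4 : wQ <= Num.sqrt t2.
  apply: nr_le; first exact: sqrtr_ge0.
  move=> x nx; apply: le_trans (CSA _ _) _; rewrite nx mulr1.
  rewrite /normA ler_sqrt; last exact: opn_ge0.
  apply: le_trans (Re_le_opn u2 nx).
  rewrite /T2 sD Re_comb /ipA -/(s _ _) aQ sC ReJ.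
  have := PPs0 x; have := sqr_ge0 (1 - lam); nra.
have F5 : wQ <= Num.sqrt t1.
  apply: nr_le; first exact: sqrtr_ge0.
  move=> x nx; rewrite aQ sC cmodJ; apply: le_trans (CSA _ _) _; rewrite nx mulr1.
  rewrite /normA ler_sqrt; last exact: opn_ge0.
  apply: le_trans (Re_le_opn u1 nx).
  rewrite /T1 sD Re_comb /ipA -/(s _ _) -aQ.
  have := PPs0 x; have := sqr_ge0 lam; nra.
have Hmu : wP + wQ <= wP + 2^-1 * (nP + Num.sqrt t1 + Num.sqrt t2) by lra.
have Hnu : wP + wQ <= 3 / 2 * wP + 2^-1 * (Num.sqrt (lam ^+ 2 * wP ^+ 2 + nQ ^+ 2)
         + Num.sqrt ((1 - lam) ^+ 2 * wP ^+ 2 + nQ ^+ 2)).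
  have e1 : nQ <= Num.sqrt (lam ^+ 2 * wP ^+ 2 + nQ ^+ 2).
    have pos : 0 <= lam ^+ 2 * wP ^+ 2 by rewrite mulr_ge0 // sqr_ge0.
    rewrite -{1}[nQ]ger0_norm // -sqrtr_sqr ler_sqrt; last by rewrite addr_ge0 // sqr_ge0.
    by rewrite lerDr.
  have e2 : nQ <= Num.sqrt ((1 - lam) ^+ 2 * wP ^+ 2 + nQ ^+ 2).
    have pos : 0 <= (1 - lam) ^+ 2 * wP ^+ 2 by rewrite mulr_ge0 // sqr_ge0.
    rewrite -{1}[nQ]ger0_norm // -sqrtr_sqr ler_sqrt; last by rewrite addr_ge0 // sqr_ge0.
    by rewrite lerDr.
  lra.
have hwp : forall x, nA x = 1 -> cmod (s (P x) x) <= wP by move=> x; exact: nr_ub.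
have hwq : forall x, nA x = 1 -> cmod (s (Q x) x) <= wQ by move=> x; exact: nr_ub.
split; rewrite le_min; apply/andP; split.
- apply: le_trans Hmu; apply: nr_le; first by rewrite addr_ge0.
  move=> x nx; rewrite sDD; apply: le_trans (cmodD _ _) _.
  by apply: lerD; [exact: hwp | exact: hwq].
- apply: le_trans Hnu; apply: nr_le; first by rewrite addr_ge0.
  move=> x nx; rewrite sDD; apply: le_trans (cmodD _ _) _.
  by apply: lerD; [exact: hwp | exact: hwq].
- apply: le_trans Hmu; apply: nr_le; first by rewrite addr_ge0.
  move=> x nx; rewrite addrC -scaleN1r sD mulN1r; apply: le_trans (cmodD _ _) _.
  by rewrite cmodN addrC; apply: lerD; [exact: hwp | exact: hwq].
- apply: le_trans Hnu; apply: nr_le; first by rewrite addr_ge0.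
  move=> x nx; rewrite addrC -scaleN1r sD mulN1r; apply: le_trans (cmodD _ _) _.
  by rewrite cmodN addrC; apply: lerD; [exact: hwp | exact: hwq].
Qed.
End Main.
Theorem corollary2p6 (R : realType) (H : lmodType R[i]) (ip : H -> H -> R[i])
  (hH : hilbert_space ip)
  (A : H -> H) (hA : positive_op ip A) (hA0 : exists x : H, A x <> 0)
  (P Q : H -> H) (hP : in_BA ip A P) (hQ : in_BA ip A Q)
  (Ps Qs : H -> H) (hPs : is_Asharp ip A P Ps) (hQs : is_Asharp ip A Q Qs)
  (lam : R) (hlam0 : 0 <= lam) (hlam1 : lam <= 1) :
  let mu := numradA ip A P
      + 2^-1 * (opnormA ip A P
         + Num.sqrt (opnormA ip A (fun x => (lam ^+ 2)%:C%C *: P (Ps x) + Q (Qs x)))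
         + Num.sqrt (opnormA ip A (fun x => ((1 - lam) ^+ 2)%:C%C *: P (Ps x) + Qs (Q x)))) in
  let nu := 3 / 2 * numradA ip A P
      + 2^-1 * (Num.sqrt (lam ^+ 2 * numradA ip A P ^+ 2 + opnormA ip A Q ^+ 2)
         + Num.sqrt ((1 - lam) ^+ 2 * numradA ip A P ^+ 2 + opnormA ip A Q ^+ 2)) in
  numradA ip A (fun x => P x + Q x) <= Num.min mu nu /\
  numradA ip A (fun x => P x - Q x) <= Num.min mu nu.
Proof.
case: hH => hip _.
have bP : bnd ip P by case: hP => -[].
have bQ : bnd ip Q by case: hQ => -[].
have bPs : bnd ip Ps by case: hPs => -[].
have bQs : bnd ip Qs by case: hQs => -[].
have aP : forall x y, ipA ip A (P x) y = ipA ip A x (Ps y).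
  case: hPs => _ [S [[_ hS] hAX _]] x y.
  by rewrite /ipA -(ipAself hip hA) hS -hAX (ipAself hip hA).
have aQ : forall x y, ipA ip A (Q x) y = ipA ip A x (Qs y).
  case: hQs => _ [S [[_ hS] hAX _]] x y.
  by rewrite /ipA -(ipAself hip hA) hS -hAX (ipAself hip hA).
exact: (main_ineq hip hA bP bQ bPs bQs aP aQ hlam0 hlam1).
Qed.
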